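(* Assume the setting of the context (in particular $\mathcal{R}(\bar{\mathbf{Y}}_{II})\succ\mathbf{0}$). Let $Y_0>0$, let $\mathbf{B}_I\in\mathbb{R}^{N_I\times N_I}$ be symmetric, and set $\mathbf{Y}_I=\mathrm{i}\mathbf{B}_I$. Define $$\mathbf{H}=\left(\mathbf{Y}_R+\mathbf{Y}_{RR}\right)^{-1}\Big(-\mathbf{Y}_{RT}+\mathbf{Y}_{RI}\big(\mathbf{Y}_I+\bar{\mathbf{Y}}_{II}\big)^{-1}\big(\mathbf{Y}_{IT}-\mathbf{Y}_{IR}(\mathbf{Y}_R+\mathbf{Y}_{RR})^{-1}\mathbf{Y}_{RT}\big)\Big).$$ (All inverses here exist.) Define $$\bar{\mathbf{B}}_I=Y_0\,\mathcal{R}(\bar{\mathbf{Y}}_{II})^{-1/2}\big(\mathbf{B}_I+\mathcal{I}(\bar{\mathbf{Y}}_{II})\big)\mathcal{R}(\bar{\mathbf{Y}}_{II})^{-1/2},\qquad \bar{\boldsymbol{\Theta}}=(Y_0\mathbf{I}+\mathrm{i}\bar{\mathbf{B}}_I)^{-1}(Y_0\mathbf{I}-\mathrm{i}\bar{\mathbf{B}}_I),$$ $$\bar{\mathbf{Y}}_{RT}=2Y_0(\mathbf{Y}_R+\mathbf{Y}_{RR})^{-1}\mathbf{Y}_{RT},\quad \bar{\mathbf{Y}}_{RI}=\sqrt2\,Y_0(\mathbf{Y}_R+\mathbf{Y}_{RR})^{-1}\mathbf{Y}_{RI}\mathcal{R}(\bar{\mathbf{Y}}_{II})^{-1/2},$$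 $$\bar{\mathbf{Y}}_{IT}=\sqrt2\,Y_0\,\mathcal{R}(\bar{\mathbf{Y}}_{II})^{-1/2}\big(\mathbf{Y}_{IT}-\mathbf{Y}_{IR}(\mathbf{Y}_R+\mathbf{Y}_{RR})^{-1}\mathbf{Y}_{RT}\big),$$ $$\bar{\mathbf{H}}_{RT}=-\tfrac{1}{2Y_0}\Big(\bar{\mathbf{Y}}_{RT}-\tfrac{1}{2Y_0}\bar{\mathbf{Y}}_{RI}\bar{\mathbf{Y}}_{IT}\Big),\quad \bar{\mathbf{H}}_{RI}=-\tfrac{1}{2Y_0}\bar{\mathbf{Y}}_{RI},\quad \bar{\mathbf{H}}_{IT}=-\tfrac{1}{2Y_0}\bar{\mathbf{Y}}_{IT}.$$ Then $\mathbf{H}=\bar{\mathbf{H}}_{RT}+\bar{\mathbf{H}}_{RI}\bar{\boldsymbol{\Theta}}\bar{\mathbf{H}}_{IT}$.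
   Context: Setting: $N_T,N_I,N_R$ positive integers, $N=N_T+N_I+N_R$; $\mathbf{Y}\in\mathbb{C}^{N\times N}$ complex symmetric with $\mathcal{R}(\mathbf{Y})$ positive definite, partitioned into blocks $\mathbf{Y}_{ab}\in\mathbb{C}^{N_a\times N_b}$, $a,b\in\{T,I,R\}$; $\mathbf{Y}_R\in\mathbb{R}^{N_R\times N_R}$ diagonal with positive diagonal entries; $\bar{\mathbf{Y}}_{II}:=\mathbf{Y}_{II}-\mathbf{Y}_{IR}(\mathbf{Y}_{RR}+\mathbf{Y}_R)^{-1}\mathbf{Y}_{RI}$. $\mathcal{R}(\cdot),\mathcal{I}(\cdot)$ denote entrywise real and imaginary parts; for a real symmetric positive definite $\mathbf{P}$, $\mathbf{P}^{-1/2}$ is the inverse of its unique positive definite square root. $\mathsf{i}$ is the imaginary unit. *)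

(* Defs.v *)
From HB Require Import structures.
From mathcomp Require Import all_boot all_order all_algebra.
From mathcomp Require Import complex.
Set Implicit Arguments. Unset Strict Implicit. Unset Printing Implicit Defensive.
Import Order.TTheory GRing.Theory Num.Theory.
Local Open Scope ring_scope.
Local Open Scope complex_scope.

Definition posdef (R : realFieldType) (n : nat) (A : 'M[R]_n) : Prop :=
  A^T = A /\ forall v : 'cV[R]_n, v != 0 -> 0 < (v^T *m A *m v) 0 0.

Definition Remx (R : rcfType) (m n : nat) (A : 'M[R[i]]_(m, n)) : 'M[R]_(m, n) :=
  map_mx (fun z : R[i] => complex.Re z) A.
Definition Immx (R : rcfType) (m n : nat) (A : 'M[R[i]]_(m, n)) : 'M[R]_(m, n) :=
  map_mx (fun z : R[i] => complex.Im z) A.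
Definition Cmx (R : rcfType) (m n : nat) (A : 'M[R]_(m, n)) : 'M[R[i]]_(m, n) :=
  map_mx (fun x => x%:C) A.

(* The unique positive definite square root S of a positive definite P is
   characterised by: S positive definite and S *m S = P. *)
Definition is_pd_sqrt (R : realFieldType) (n : nat) (P S : 'M[R]_n) : Prop :=
  posdef S /\ S *m S = P.

(* Main.v *)
Require Import Defs.
From HB Require Import structures.
From mathcomp Require Import all_boot all_order all_algebra.
From mathcomp Require Import complex.
From mathcomp Require Import ring lra.
Import Order.TTheory GRing.Theory Num.Theory.
Local Open Scope ring_scope.
Local Open Scope complex_scope.

Section H.
Variable R : rcfType.

Lemma CmxM m n p (A : 'M[R]_(m, n)) (B : 'M[R]_(n, p)) :
  Cmx (A *m B) = Cmx A *m Cmx B.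
Proof. exact: (map_mxM (real_complex R)). Qed.
Lemma CmxD m n (A B : 'M[R]_(m, n)) : Cmx (A + B) = Cmx A + Cmx B.
Proof. exact: (map_mxD (real_complex R)). Qed.
Lemma CmxZ m n a (A : 'M[R]_(m, n)) : Cmx (a *: A) = a%:C *: Cmx A.
Proof. exact: (map_mxZ (real_complex R)). Qed.
Lemma Cmx1 n : Cmx (1%:M : 'M[R]_n) = 1%:M.
Proof. exact: (map_mx1 (real_complex R)). Qed.
Lemma Cmx_tr m n (A : 'M[R]_(m, n)) : Cmx A^T = (Cmx A)^T.
Proof. by apply/matrixP => a b; rewrite !mxE. Qed.
Lemma Immx_tr m n (A : 'M[R[i]]_(m, n)) : Immx A^T = (Immx A)^T.
Proof. by apply/matrixP => a b; rewrite !mxE. Qed.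
Lemma Remx_Immx m n (A : 'M[R[i]]_(m, n)) :
  A = Cmx (Remx A) + (0 +i* 1) *: Cmx (Immx A).
Proof.
apply/matrixP => a b; rewrite !mxE; case: (A a b) => x y.
by simpc.
Qed.

Lemma inv_uniq n (A B : 'M[R[i]]_n) : A *m B = 1%:M -> invmx A = B.
Proof.
move=> AB; have [uA _] := mulmx1_unit AB.
by rewrite -[invmx A]mulmx1 -AB mulmxA mulVmx // mul1mx.
Qed.

Lemma sqsum0 n (v : 'rV[R]_n) : (v *m v^T) 0 0 = 0 -> v = 0.
Proof.
rewrite !mxE => h; apply/rowP => k; rewrite mxE.
have : \sum_j v 0 j * v^T j 0 == 0 by rewrite h.
rewrite psumr_eq0; last by move=> j _; rewrite mxE -expr2 sqr_ge0.
move/allP => /(_ k (mem_index_enum _)) /implyP /(_ isT).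
by rewrite mxE mulf_eq0 orbb => /eqP.
Qed.

Lemma sqsum_ge0 n (v : 'rV[R]_n) : 0 <= (v *m v^T) 0 0.
Proof. rewrite !mxE; apply: sumr_ge0 => j _; by rewrite mxE -expr2 sqr_ge0. Qed.

Lemma unit_1TT n (T : 'M[R]_n) : 1%:M + T^T *m T \in unitmx.
Proof.
rewrite unitmxE unitfE; apply/negP => /det0P [v nz vA].
have h : (v *m (1%:M + T^T *m T) *m v^T) 0 0 = 0 by rewrite vA mul0mx mxE.
move: h; rewrite mulmxDr mulmx1 mulmxDl mxE.
have -> : v *m (T^T *m T) *m v^T = (v *m T^T) *m (v *m T^T)^T.
  by rewrite trmx_mul trmxK !mulmxA.
move=> h.
have h1 := sqsum_ge0 _ v; have h2 := sqsum_ge0 _ (v *m T^T).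
have : (v *m v^T) 0 0 = 0 by lra.
by move/sqsum0 => /eqP; rewrite (negbTE nz).
Qed.

Lemma unit_posdef n (S : 'M[R]_n) : posdef S -> S \in unitmx.
Proof.
move=> [St Sp]; rewrite unitmxE unitfE; apply/negP => /det0P [v nz vA].
have nz' : v^T != 0 by rewrite -(inj_eq (@trmx_inj _ _ _)) trmxK trmx0.
have := Sp _ nz'; rewrite trmxK vA mul0mx mxE ltxx //.
Qed.

End H.

Lemma final_alg (F : fieldType) m n q (A : 'M[F]_(m,q)) (P1 : 'M[F]_(m,n)) (X : 'M[F]_n) (P2 : 'M[F]_(n,q)) (a b c s : F) :
 c * a = -1 -> c * (b * s * s) = - 2^-1 -> c * s * (c * s) = 2^-1 -> (2:F) != 0 ->
 -A + P1 *m X *m P2 = c *: (a *: A - b *: ((s *: P1) *m (s *: P2))) + (c *: (s *: P1)) *m (2%:R *: X - 1%:M) *m (c *: (s *: P2)).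
Proof.
move=> e1 e2 e3 h2.
rewrite mulmxBr mulmxBl mulmx1 -!scalemxAl -!scalemxAr !scalerA scalerBr !scalerA.
rewrite e1 e2 e3 scaleN1r -scalemxAl scalerA mulVf // scale1r scaleNr opprK.
by rewrite -addrA [X in _ = _ + X]addrC subrK.
Qed.


Theorem proposition1 (R : rcfType) (NT NI NR : nat)
  (YTT : 'M[R[i]]_(NT, NT)) (YTI : 'M[R[i]]_(NT, NI)) (YTR : 'M[R[i]]_(NT, NR))
  (YIT : 'M[R[i]]_(NI, NT)) (YII : 'M[R[i]]_(NI, NI)) (YIR : 'M[R[i]]_(NI, NR))
  (YRT : 'M[R[i]]_(NR, NT)) (YRI : 'M[R[i]]_(NR, NI)) (YRR : 'M[R[i]]_(NR, NR))
  (YR : 'M[R]_NR) (BI : 'M[R]_NI) (Y0 : R) (S : 'M[R]_NI) :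
  (0 < NT)%N -> (0 < NI)%N -> (0 < NR)%N ->
  let Y : 'M[R[i]]_(NT + NI + NR) :=
    block_mx (block_mx YTT YTI YIT YII) (col_mx YTR YIR)
             (row_mx YRT YRI) YRR in
  Y^T = Y ->
  posdef (Remx Y) ->
  is_diag_mx YR -> (forall k : 'I_NR, 0 < YR k k) ->
  let YRRi := invmx (Cmx YR + YRR) in
  let YbII := YII - YIR *m YRRi *m YRI in
  posdef (Remx YbII) ->
  0 < Y0 ->
  BI^T = BI ->
  is_pd_sqrt (Remx YbII) S ->
  let Pih := invmx S in (* R(YbII)^{-1/2} *)
  let YI := (0 +i* 1) *: Cmx BI in
  let H := YRRi *m (- YRT + YRI *m invmx (YI + YbII) *m (YIT - YIR *m YRRi *m YRT)) in
  let BbI := Y0 *: (Pih *m (BI + Immx YbII) *m Pih) in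
  let Thb := invmx (Y0%:C *: 1%:M + (0 +i* 1) *: Cmx BbI) *m (Y0%:C *: 1%:M - (0 +i* 1) *: Cmx BbI) in
  let YbRT := (2 * Y0)%:C *: (YRRi *m YRT) in
  let YbRI := (Num.sqrt 2 * Y0)%:C *: (YRRi *m YRI *m Cmx Pih) in
  let YbIT := (Num.sqrt 2 * Y0)%:C *: (Cmx Pih *m (YIT - YIR *m YRRi *m YRT)) in
  let c := (- (2 * Y0)^-1)%:C in
  let HbRT := c *: (YbRT - ((2 * Y0)^-1)%:C *: (YbRI *m YbIT)) in
  let HbRI := c *: YbRI in
  let HbIT := c *: YbIT in
  H = HbRT + HbRI *m Thb *m HbIT.
Proof.
move=> _ _ _ Y Yt _ YRd _ YRRi YbII _ Y0p BIt [Sp SS] Pih YI H BbI Thb YbRT YbRI YbIT c HbRT HbRI HbIT.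
have [St _] := Sp.
have uS := unit_posdef _ _ _ Sp.
have SPih : S *m Pih = 1%:M by rewrite mulmxV.
have PihS : Pih *m S = 1%:M by rewrite mulVmx.
have Piht : Pih^T = Pih by rewrite /Pih trmx_inv St.
have YRt : YR^T = YR.
  apply/matrixP => a b; rewrite mxE; have [->|ab] := eqVneq a b => //.
  by rewrite !(is_diag_mxP YRd) // eq_sym.
have YbIIt : YbII^T = YbII.
  have e := Yt; rewrite /Y !tr_block_mx !tr_col_mx !tr_row_mx in e.
  have [e1 e2 e3 e4] := eq_block_mx e.
  have [f1 f2 f3 f4] := eq_block_mx e1.
  move: e3 => /eq_row_mx [h1 h2].
  rewrite /YbII /YRRi linearB /= !trmx_mul trmx_inv linearD /= -Cmx_tr YRt e4 f4.
  have k : YRI^T = YIR by case/eq_col_mx: e2.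
  by rewrite k -k trmxK mulmxA.
set j : R[i] := 0 +i* 1.
have jj : j * j = -1 by rewrite /j; simpc.
set T := Pih *m (BI + Immx YbII) *m Pih.
have Tt : T^T = T.
  by rewrite /T !trmx_mul Piht linearD /= BIt -Immx_tr YbIIt mulmxA.
have Tdef : Pih *m (BI + Immx YbII) *m Pih = T by [].
clearbody T.
set K0 := 1%:M + j *: Cmx T.
have K0Km : K0 *m (1%:M - j *: Cmx T) = Cmx (1%:M + T^T *m T).
  rewrite Tt CmxD Cmx1 CmxM /K0 mulmxDl mulmxBr mulmxBr !mul1mx mulmx1.
  rewrite -!scalemxAl -!scalemxAr scalerA jj scaleN1r opprK.
  by rewrite addrA subrK.
have uK0 : K0 \in unitmx.
  have h : K0 *m ((1%:M - j *: Cmx T) *m invmx (Cmx (1%:M + T^T *m T))) = 1%:M.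
    by rewrite mulmxA K0Km mulmxV // map_unitmx unit_1TT.
  by case: (mulmx1_unit h).
have Meq : YI + YbII = Cmx S *m K0 *m Cmx S.
  rewrite /K0 mulmxDr mulmx1 mulmxDl -CmxM SS -scalemxAr -scalemxAl -!CmxM.
  rewrite -Tdef !mulmxA SPih mul1mx -mulmxA PihS mulmx1 CmxD scalerDr.
  by rewrite {1}(Remx_Immx _ _ _ YbII) /YI -/j addrCA.
have invM : invmx (YI + YbII) = Cmx Pih *m invmx K0 *m Cmx Pih.
  have LL : Cmx S *m Cmx Pih = 1%:M by rewrite -CmxM SPih Cmx1.
  apply: inv_uniq; rewrite Meq !mulmxA -(mulmxA (Cmx S *m K0)) LL mulmx1.
  by rewrite -(mulmxA (Cmx S)) (mulmxV uK0) mulmx1 LL.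
have Keq : Y0%:C *: 1%:M + j *: Cmx BbI = Y0%:C *: K0.
  rewrite /BbI Tdef CmxZ /K0 scalerDr !scalerA mulrC //.
have Y0u : Y0%:C \is a GRing.unit.
  by rewrite unitfE; apply/eqP => /complexI /eqP; rewrite gt_eqF.
have ThbE : Thb = 2%:R *: invmx K0 - 1%:M.
  rewrite /Thb Keq invmxZ ?unitmxZ //.
  have -> : Y0%:C *: 1%:M - j *: Cmx BbI = Y0%:C *: (2%:R *: 1%:M - K0).
    rewrite scalerBr -Keq scalerA mulrC -scalerA scaler_nat mulr2n.
    by rewrite opprD addrACA subrr add0r.
  rewrite -scalemxAl -scalemxAr scalerA mulVf ?scale1r ?mulmxBr -?scalemxAr ?mulmxV ?mulmx1 //. by rewrite mulVmx.
rewrite /H invM ThbE /HbRT /HbRI /HbIT /YbRT /YbRI /YbIT.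
set A := YRRi *m YRT; set Cc := YIT - YIR *m YRRi *m YRT.
have -> : YRRi *m (- YRT + YRI *m (Cmx Pih *m invmx K0 *m Cmx Pih) *m Cc)
   = - A + (YRRi *m YRI *m Cmx Pih) *m invmx K0 *m (Cmx Pih *m Cc).
  by rewrite mulmxDr mulmxN !mulmxA.
have Y0n : Y0 != 0 by rewrite gt_eqF.
have hr : Num.sqrt 2 * Num.sqrt 2 = 2 :> R by rewrite -expr2 sqr_sqrtr // ler0n.
have e2C : (- 2^-1 : R[i]) = (- 2^-1 : R)%:C.
  by rewrite rmorphN rmorphV ?unitfE ?pnatr_eq0 // rmorph_nat.
have e2C' : (2^-1 : R[i]) = (2^-1 : R)%:C.
  by rewrite rmorphV ?unitfE ?pnatr_eq0 // rmorph_nat.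
apply: final_alg.
- rewrite /c -rmorphM -(rmorph1 (real_complex R)) -rmorphN; congr (_%:C).
  by field.
- rewrite /c e2C -!rmorphM; congr (_%:C).
  have -> : - (2 * Y0)^-1 * ((2 * Y0)^-1 * (Num.sqrt 2 * Y0) * (Num.sqrt 2 * Y0))
     = - (2 * Y0)^-1 * ((2 * Y0)^-1 * (Num.sqrt 2 * Num.sqrt 2) * (Y0 * Y0)) by ring.
  rewrite hr; by field.
- rewrite /c e2C' -!rmorphM; congr (_%:C).
  have -> : - (2 * Y0)^-1 * (Num.sqrt 2 * Y0) * (- (2 * Y0)^-1 * (Num.sqrt 2 * Y0))
     = (2 * Y0)^-1 * (2 * Y0)^-1 * (Num.sqrt 2 * Num.sqrt 2) * (Y0 * Y0) by ring.
  rewrite hr; by field.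
- by rewrite pnatr_eq0.
Qed.
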